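(* There exist a polynomial $p$ and a constant $c>0$ such that for every integer $k\geq 1$ there exist an approval election $E=(N,C,(A_v)_{v\in N},k)$ with $|N|\le p(k)$ voters, a committee $W_0\subseteq C$ with $|W_0|=k$, and a valid sequence of swaps $(a_1,b_1),\dots,(a_s,b_s)$ starting from $W_0$ with $s\ge c\,k^{\log k}$ (i.e., of length $\Omega(k^{\log k})$) such that every swap in the sequence strictly increases the PAV score, i.e., $\Delta(W_{t-1},a_t,b_t)>0$ for all $t\in[s]$.
   Context: An approval election is a tuple $E=(N,C,(A_v)_{v\in N},k)$ where $N=[n]$ is a set of voters, $C$ is a finite set of candidates, $A_v\subseteq C$ is the approval ballot of voter $v$, and $k\in[|C|]$ is the target committee size. A committee is a subset of $C$. The PAV score of a committee $W$ is $\textsc{pavsc}(W)=\sum_{v\in N}\sum_{j=1}^{|A_v\cap W|}\frac{1}{j}$. For $a\in W$, $b\notin W$, let $\Delta(W,a,b)=\textsc{pavsc}((W\setminus\{a\})\cup\{b\})-\textsc{pavsc}(W)$. A sequence of swaps $(a_1,b_1),\dots,(a_s,b_s)$ is valid starting from $W_0$ if, setting $W_t=(W_{t-1}\cup\{b_t\})\setminus\{a_t\}$, we have $a_t\in W_{t-1}$ and $b_t\notin W_{t-1}$ for every $t\in[s]$. Here $\log$ denotes the base-2 logarithm. *)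

(* Defs.v *)
From HB Require Import structures.
From mathcomp Require Import all_boot all_order all_algebra.
From mathcomp Require Import reals exp.
Set Implicit Arguments. Unset Strict Implicit. Unset Printing Implicit Defensive.
Import Order.TTheory GRing.Theory Num.Theory.
Local Open Scope ring_scope.

Definition pavsc (R : realType) (n m : nat) (A : 'I_n -> {set 'I_m})
  (W : {set 'I_m}) : R :=
  \sum_(v < n) \sum_(j < #|A v :&: W|) (j.+1%:R)^-1.

Definition pav_delta (R : realType) (n m : nat) (A : 'I_n -> {set 'I_m})
  (W : {set 'I_m}) (a b : 'I_m) : R :=
  pavsc R A (b |: (W :\ a)) - pavsc R A W.

Fixpoint pav_improving_seq (R : realType) (n m : nat) (A : 'I_n -> {set 'I_m})
  (W : {set 'I_m}) (s : seq ('I_m * 'I_m)) : Prop :=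
  match s with
  | [::] => True
  | (a, b) :: s' =>
      [/\ a \in W, b \notin W, 0 < pav_delta R A W a b
        & pav_improving_seq R A ((b |: W) :\ a) s']
  end.

(* Main.v *)
Require Import Defs.
From HB Require Import structures.
From mathcomp Require Import all_boot all_order all_algebra.
From mathcomp Require Import reals exp.
From mathcomp Require Import zify ring lra.
Set Implicit Arguments. Unset Strict Implicit. Unset Printing Implicit Defensive.
Import Order.TTheory GRing.Theory Num.Theory.
Local Open Scope ring_scope.


Section Generic.
Variables (R : realType) (V C : finType) (ap : V -> C -> bool).

Definition hr (n : nat) : R := \sum_(j < n) (j.+1%:R)^-1.
Definition cnt (W : {set C}) (v : V) : nat := #|[set x in W | ap v x]|.
Definition gsc (W : {set C}) : R := \sum_v hr (cnt W v).

Fixpoint gimp (W : {set C}) (s : seq (C * C)) : Prop :=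
  match s with
  | [::] => True
  | (a, b) :: s' =>
      [/\ a \in W, b \notin W, 0 < gsc (b |: (W :\ a)) - gsc W
        & gimp ((b |: W) :\ a) s']
  end.

Definition fC : C -> 'I_#|C| := enum_rank.
Definition Aord (v : 'I_#|V|) : {set 'I_#|C|} :=
  [set x | ap (enum_val v) (enum_val x)].

Lemma fC_inj : injective fC.
Proof. exact: enum_rank_inj. Qed.

Lemma pav_transfer_sc (W : {set C}) :
  pavsc R Aord (fC @: W) = gsc W.
Proof.
rewrite /pavsc /gsc.
rewrite (reindex (@enum_rank V)) /=; last first.
  by apply: onW_bij; exact: enum_rank_bij.
apply: eq_bigr => v _; rewrite /hr /cnt.
suff -> : Aord (enum_rank v) :&: fC @: W = fC @: [set x in W | ap v x].
  by rewrite card_imset //; exact: fC_inj.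
apply/setP => y.
have [x ->] : exists x, y = fC x by exists (enum_val y); rewrite /fC enum_valK.
rewrite !inE !(mem_imset _ _ fC_inj) inE /fC !enum_rankK.
by rewrite andbC.
Qed.

Lemma pav_transfer_path (W : {set C}) (s : seq (C * C)) :
  gimp W s ->
  pav_improving_seq R Aord (fC @: W) [seq (fC p.1, fC p.2) | p <- s].
Proof.
elim: s W => [|[a b] s IH] W //=.
case=> aW bW pos rest; split.
- by rewrite (mem_imset _ _ fC_inj).
- by rewrite (mem_imset _ _ fC_inj).
- rewrite /pav_delta.
  have -> : fC b |: (fC @: W :\ fC a) = fC @: (b |: (W :\ a)).
    apply/setP => y.
    have [x ->] : exists x, y = fC x by exists (enum_val y); rewrite /fC enum_valK.
    rewrite !inE !(mem_imset _ _ fC_inj).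
    by rewrite !inE (inj_eq fC_inj) (inj_eq fC_inj).
  by rewrite !pav_transfer_sc.
- have -> : (fC b |: fC @: W) :\ fC a = fC @: ((b |: W) :\ a).
    apply/setP => y.
    have [x ->] : exists x, y = fC x by exists (enum_val y); rewrite /fC enum_valK.
    rewrite !inE !(mem_imset _ _ fC_inj).
    by rewrite !inE (inj_eq fC_inj) (inj_eq fC_inj).
  exact: IH.
Qed.

End Generic.


Section CF.
Variable R : realType.

Definition Tb (m : nat) (f : nat -> R) : R :=
  \sum_(g < m.+1) ('C(m, g))%:R * ((-1) ^+ g * f g).

Lemma Tb_wide m N (f : nat -> R) : (m < N)%N ->
  \sum_(g < N) ('C(m, g))%:R * ((-1) ^+ g * f g) = Tb m f.
Proof.
elim: N => [//|N IH]; rewrite ltnS leq_eqVlt => /orP[/eqP <-|h] //.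
by rewrite big_ord_recr /= IH // bin_small // mul0r addr0.
Qed.

Lemma Tb_pascal m (f : nat -> R) : Tb m.+1 f = Tb m f - Tb m (fun g => f g.+1).
Proof.
rewrite /Tb big_ord_recl /=.
under eq_bigr => g _ do rewrite binS natrD mulrDl.
rewrite big_split /= addrA.
congr (_ + _).
  have := @Tb_wide m m.+2 f (leqnSn _); rewrite /Tb => <-.
  rewrite [in RHS]big_ord_recl /= !bin0.
  by congr (_ + _); apply: eq_bigr => g _; rewrite /bump add1n.
rewrite -sumrN; apply: eq_bigr => g _.
by rewrite /bump add1n exprS mulN1r mulNr mulrN.
Qed.

Definition Pr (m : nat) (x : R) : R := \prod_(i < m.+1) (x + i%:R).
Definition cf (m : nat) (x : R) : R := (m`!)%:R / Pr m x.

Lemma Pr_gt0 m x : 0 < x -> 0 < Pr m x.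
Proof.
move=> x0; apply: prodr_gt0 => i _.
by apply: (lt_le_trans x0); rewrite lerDl ler0n.
Qed.

Lemma cf_gt0 m x : 0 < x -> 0 < cf m x.
Proof.
move=> x0; rewrite /cf; apply: divr_gt0; last exact: Pr_gt0.
by rewrite ltr0n fact_gt0.
Qed.

Lemma PrS m x : Pr m.+1 x = Pr m x * (x + m.+1%:R).
Proof. by rewrite /Pr big_ord_recr. Qed.

Lemma PrS' m x : Pr m.+1 x = x * Pr m (x + 1).
Proof.
rewrite /Pr big_ord_recl addr0; congr (_ * _); apply: eq_bigr => i _.
by rewrite lift0 -addn1 natrD addrA addrAC.
Qed.

Lemma cfS m x : 0 < x -> cf m x - cf m (x + 1) = cf m.+1 x.
Proof.
move=> x0.
have a0 : Pr m x != 0 by rewrite gt_eqF // Pr_gt0.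
have b0 : Pr m (x + 1) != 0 by rewrite gt_eqF // Pr_gt0 // addr_gt0.
have x0' : x != 0 by rewrite gt_eqF.
have c0 : x + m.+1%:R != 0 by rewrite gt_eqF // addr_gt0.
have hb : Pr m (x + 1) = Pr m x * (x + m.+1%:R) / x.
  by rewrite -PrS PrS' mulrC mulKf.
rewrite /cf hb PrS factS natrM.
field.
move: c0; rewrite -natr1 (addrC m%:R) => c0; by rewrite a0 x0' c0.
Qed.
End CF.

Section CF2.
Variable R : realType.
Lemma Tb_cf m (x : R) : 0 < x -> Tb m (fun g => (x + g%:R)^-1) = cf m x.
Proof.
elim: m x => [|m IH] x x0.
  by rewrite /Tb /cf big_ord1 /Pr big_ord1 /= bin0 expr0 !mul1r addr0.
rewrite Tb_pascal IH //.
have -> : Tb m (fun g : nat => (x + g.+1%:R)^-1) = Tb m (fun g : nat => (x + 1 + g%:R)^-1).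
  by apply: eq_bigr => g _; rewrite -natr1 addrAC addrA.
by rewrite IH ?cfS // addr_gt0.
Qed.

Lemma cf_ratio m (x : R) : cf m.+1 x = cf m x * m.+1%:R / (x + m.+1%:R).
Proof. by rewrite /cf PrS factS natrM invfM; ring. Qed.
End CF2.


Lemma card_sum (T : finType) (P : pred T) : #|[set x | P x]| = (\sum_x (P x : nat))%N.
Proof. by rewrite -sum1dep_card big_mkcond; apply: eq_bigr => x _; case: (P x). Qed.

Lemma sum_ltn N n : (\sum_(f < N) (f < n : nat))%N = minn n N.
Proof.
elim: N => [|N IH]; first by rewrite big_ord0 minn0.
rewrite big_ord_recr /= IH.
case: (ltnP N n) => h /=; lia.
Qed.

Lemma sum_eq1 N a (X Y : bool) : (a.+1 < N)%N ->
  (\sum_(l < N) (((l == a :> nat) && X) || ((l == a.+1 :> nat) && Y) : nat))%N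
  = (X + Y)%N.
Proof.
move=> aN.
have aN' : (a < N)%N by lia.
rewrite (bigD1 (Ordinal aN)) //= (bigD1 (Ordinal aN')) /=; last first.
  by rewrite -val_eqE /= neq_ltn ltnSn.
have e1 : (a.+1 == a) = false by lia.
have e2 : (a == a.+1) = false by lia.
rewrite eqxx e1 e2 /=.
rewrite eqxx orbF big1; first by rewrite addn0 addnC.
move=> l /andP[/eqP hl1 /eqP hl2].
have h1 : (l != a :> nat) by apply/eqP => h; apply: hl2; apply: val_inj.
have h2 : (l != a.+1 :> nat) by apply/eqP => h; apply: hl1; apply: val_inj.
by rewrite (negbTE h1) (negbTE h2).
Qed.

Section Constr.
Variables (d Q B : nat).

Definition Vt := ('I_d * 'I_Q * bool * 'I_d * 'I_(2 ^ d))%type.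
Definition Ct := ('I_(B + d) + 'I_d.+1 * 'I_Q.+1)%type.

Definition mm (j : nat) : nat := (d.-1 - j)%N.
Definition ev (c : bool) (g : nat) : bool := ~~ odd (c + g).

Definition ap (v : Vt) (x : Ct) : bool :=
  let: ((((j, i), c), g), r) := v in
  (r < 'C(mm j, g))%N &&
  match x with
  | inl f => (f < B + g)%N
  | inr (l, t) => ((l == j :> nat) && ((i < t)%N == ev c g))
                  || ((l == j.+1 :> nat) && (c != odd t))
  end.

Definition Wp (p : nat -> nat) : {set Ct} :=
  [set x : Ct | match x with inl _ => true | inr (l, t) => (t == p l :> nat) end].

Lemma cnt_Wp (p : nat -> nat) (hp : forall l, (l <= d)%N -> (p l <= Q)%N)
  (j : 'I_d) (i : 'I_Q) (c : bool) (g : 'I_d) (r : 'I_(2 ^ d)) :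
  cnt ap (Wp p) ((((j, i), c), g), r) =
  if (r < 'C(mm j, g))%N then
    (B + g + ((i < p j)%N == ev c g) + (c != odd (p j.+1)))%N
  else 0%N.
Proof.
rewrite /cnt.
have -> : [set x in Wp p | ap ((((j, i), c), g), r) x] =
          [set x | (x \in Wp p) && ap ((((j, i), c), g), r) x].
  by apply/setP => x; rewrite !inE.
rewrite card_sum big_sumType /=.
have -> : (\sum_(x : 'I_d.+1 * 'I_Q.+1) ((inr x \in Wp p) && ap ((((j, i), c), g), r) (inr x) : nat))%N
   = (\sum_(l < d.+1) \sum_(t < Q.+1) ((t == p l :> nat) && ap ((((j, i), c), g), r) (inr (l, t)) : nat))%N.
  by rewrite pair_big; apply: eq_bigr => [[l t]] _; rewrite inE.
have -> : (\sum_(l < d.+1) \sum_(t < Q.+1) ((t == p l :> nat) && ap ((((j, i), c), g), r) (inr (l, t)) : nat))%N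
   = (\sum_(l < d.+1) (ap ((((j, i), c), g), r) (inr (l, inord (p l))) : nat))%N.
  apply: eq_bigr => l _.
  rewrite (bigD1 (inord (p l))) //= inordK; last by rewrite ltnS hp // -ltnS.
  rewrite eqxx /= big1 ?addn0 // => t /eqP ht.
  have -> : (t == p l :> nat) = false.
    apply/negbTE/eqP => h; apply: ht; apply: val_inj; rewrite /= h inordK //.
    by rewrite ltnS hp // -ltnS.
  by [].
rewrite /ap /=.
case: (r < 'C(mm j, g))%N => /=; last first.
  by rewrite big1 ?add0n ?big1 // => *; rewrite andbF.
have -> : (\sum_(l < d.+1) (((l == j :> nat) && ((i < (inord (p l) : 'I_Q.+1))%N == ev c g))
      || ((l == j.+1 :> nat) && (c != odd (inord (p l) : 'I_Q.+1))) : nat))%N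
   = (\sum_(l < d.+1) (((l == j :> nat) && ((i < p j)%N == ev c g))
      || ((l == j.+1 :> nat) && (c != odd (p j.+1))) : nat))%N.
  apply: eq_bigr => l _.
  have hl : (p l <= Q)%N by apply: hp; rewrite -ltnS.
  case: (eqVneq (l : nat) j) => [e|ne].
    rewrite /= inordK -?e ?ltnS //.
    by rewrite (_ : (l == l.+1 :> nat) = false) //; lia.
  rewrite /=; case: (eqVneq (l : nat) j.+1) => [e|ne2] //=.
  by rewrite inordK ?ltnS // e.
rewrite sum_eq1; last by rewrite ltnS.
have -> : (\sum_(i0 < B + d) ((inl i0 \in Wp p) && (i0 < B + g)%N : nat))%N
   = (\sum_(i0 < B + d) ((i0 < B + g)%N : nat))%N.
  by apply: eq_bigr => f _; rewrite inE.
rewrite sum_ltn.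
have -> : minn (B + g) (B + d) = (B + g)%N by apply/minn_idPl; rewrite leq_add2l ltnW.
by rewrite addnA.
Qed.


Lemma sumV (T : Type) (idx : T) (op : Monoid.com_law idx) (F : Vt -> T) :
  \big[op/idx]_(v : Vt) F v =
  \big[op/idx]_(j < d) \big[op/idx]_(i < Q) \big[op/idx]_(c : bool)
    \big[op/idx]_(g < d) \big[op/idx]_(r < 2 ^ d) F ((((j, i), c), g), r).
Proof.
rewrite pair_big pair_big pair_big pair_big.
by apply: eq_bigr => [[[[[j i] c] g] r]] _.
Qed.

Variable R : realType.

Definition phi (j : nat) (al pi : bool) : R :=
  \sum_(c : bool) \sum_(g < d)
     ('C(mm j, g))%:R * hr R (B + g + (al == ev c g) + (c != pi)).

Lemma binom_le m g : ('C(m, g) <= 2 ^ m)%N.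
Proof.
elim: m g => [|m IH] [|g] //=.
  by rewrite bin0 expn_gt0.
rewrite binS expnS mul2n -addnn leq_add //.
Qed.

Lemma gsc_Wp (p : nat -> nat) (hp : forall l, (l <= d)%N -> (p l <= Q)%N) :
  gsc R ap (Wp p) = \sum_(j < d) \sum_(i < Q) phi j (i < p j)%N (odd (p j.+1)).
Proof.
rewrite /gsc sumV; apply: eq_bigr => j _; apply: eq_bigr => i _.
rewrite /phi; apply: eq_bigr => c _; apply: eq_bigr => g _.
under eq_bigr => r _ do rewrite cnt_Wp //.
have -> : \sum_(r < 2 ^ d) hr R (if (r < 'C(mm j, g))%N
          then (B + g + ((i < p j)%N == ev c g) + (c != odd (p j.+1)))%N else 0%N)
   = \sum_(r < 2 ^ d) ((r < 'C(mm j, g))%N : nat)%:R *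
          hr R (B + g + ((i < p j)%N == ev c g) + (c != odd (p j.+1))).
  apply: eq_bigr => r _; case: ifP => _; first by rewrite mul1r.
  by rewrite mul0r /hr big_ord0.
rewrite -mulr_suml -natr_sum sum_ltn.
have -> : minn 'C(mm j, g) (2 ^ d) = 'C(mm j, g).
  apply/minn_idPl; apply: leq_trans (binom_le _ _) _.
  rewrite leq_exp2l // /mm; lia.
by [].
Qed.


Lemma phi_sym j al pi : phi j al pi = phi j (~~ al) (~~ pi).
Proof.
rewrite /phi !big_bool /= addrC; congr (_ + _); apply: eq_bigr => g _.
  by rewrite /ev /= negbK; case: al; case: pi; case: (odd g).
by rewrite /ev /=; case: al; case: pi; case: (odd g).
Qed.

Definition eps (j : nat) : R := phi j true false - phi j false false.

Lemma phi_val j al pi : phi j al pi = phi j false false + eps j *+ (al != pi).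
Proof.
rewrite /eps; case: al; case: pi => /=.
- by rewrite mulr0n addr0 (phi_sym j true true).
- by rewrite mulr1n addrC subrK.
- by rewrite mulr1n addrC subrK (phi_sym j false true).
- by rewrite mulr0n addr0.
Qed.

Definition psi (t : nat) (pi : bool) : nat := if pi then (Q - t)%N else t.

Lemma sum_psi t pi : (t <= Q)%N ->
  (\sum_(i < Q) (((i < t)%N != pi) : nat))%N = psi t pi.
Proof.
move=> tQ; rewrite /psi; case: pi.
  have h : (\sum_(i < Q) (((i < t)%N != true) : nat) + \sum_(i < Q) ((i < t)%N : nat))%N = Q.
    rewrite -big_split /= -[X in _ = X]card_ord -sum1_card; apply: eq_bigr => i _.
    by case: (i < t)%N.
  rewrite sum_ltn in h; move: h; rewrite (minn_idPl tQ); lia.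
have -> : (\sum_(i < Q) (((i < t)%N != false) : nat))%N = (\sum_(i < Q) ((i < t)%N : nat))%N.
  by apply: eq_bigr => i _; case: (i < t)%N.
by rewrite sum_ltn (minn_idPl tQ).
Qed.

Lemma gsc_Wp2 (p : nat -> nat) (hp : forall l, (l <= d)%N -> (p l <= Q)%N) :
  gsc R ap (Wp p) = \sum_(j < d) (phi j false false *+ Q)
     + \sum_(j < d) eps j *+ psi (p j) (odd (p j.+1)).
Proof.
rewrite gsc_Wp // -big_split /=; apply: eq_bigr => j _.
under eq_bigr => i _ do rewrite phi_val.
rewrite big_split /= sumr_const card_ord; congr (_ + _).
rewrite -sum_psi; last by apply: hp; apply: ltnW.
by rewrite -sumrMnr.
Qed.


Lemma hrS n : hr R n.+1 = hr R n + (n.+1%:R)^-1.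
Proof. by rewrite /hr big_ord_recr. Qed.

Lemma hr_diff n (e : bool) :
  hr R (n + e) - hr R (n + ~~ e) = (-1) ^+ (~~ e) * (n.+1%:R)^-1.
Proof.
case: e => /=; rewrite ?addn1 ?addn0 hrS.
  by rewrite expr0 mul1r addrAC subrr add0r.
by rewrite expr1 mulN1r opprD addrA subrr add0r.
Qed.

Lemma eps_sum j : eps j = \sum_(g < d) ('C(mm j, g))%:R *
   ((-1) ^+ g * (((B.+1)%:R + g%:R)^-1) - (-1) ^+ g * (((B.+1)%:R + 1 + g%:R)^-1)).
Proof.
rewrite /eps /phi !big_bool /= opprD addrACA -!sumrB -big_split /=.
apply: eq_bigr => g _.
rewrite -!mulrBr -mulrDr; congr (_ * _).
have eT : forall b : bool, (true == b) = b by case.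
have eF : forall b : bool, (false == b) = ~~ b by case.
rewrite !eT !eF !addn0 !(addnAC _ _ 1%N) !hr_diff /ev !negbK /=.
rewrite add0n.
rewrite (_ : (B + 1 + g).+1%:R = (B.+1)%:R + 1 + g%:R :> R); last first.
  by rewrite -!natr1 !natrD; ring.
rewrite (_ : (B + g).+1%:R = (B.+1)%:R + g%:R :> R); last first.
  by rewrite -!natr1 !natrD; ring.
rewrite -(signr_odd _ g).
by case: (odd g) => /=; rewrite ?expr0 ?expr1; ring.
Qed.

Lemma eps_cf j : (0 < d)%N -> eps j = cf (mm j).+1 ((B.+1)%:R : R).
Proof.
move=> d0.
have md : (mm j < d)%N by rewrite /mm; lia.
rewrite eps_sum.
under eq_bigr => g _ do rewrite mulrBr.
rewrite sumrB (@Tb_wide R (mm j) d (fun g => ((B.+1)%:R + g%:R)^-1) md).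
rewrite (@Tb_wide R (mm j) d (fun g => ((B.+1)%:R + 1 + g%:R)^-1) md).
rewrite !Tb_cf ?ltr0Sn // ?cfS ?ltr0Sn //.
by rewrite addr_gt0 ?ltr0Sn.
Qed.


Definition Gv (p : nat -> nat) : R := \sum_(j < d) eps j *+ psi (p j) (odd (p j.+1)).
Definition valid (p : nat -> nat) := (forall l, (l <= d)%N -> (p l <= Q)%N).
Definition upd (p : nat -> nat) (j t : nat) := fun l => if l == j then t else p l.

Lemma sum2 (h : nat -> R) j : (j < d)%N ->
  (forall l, l != j -> l.+1 != j -> h l = 0) ->
  \sum_(l < d) h l = h j + (if j is j'.+1 then h j' else 0).
Proof.
move=> jd hz.
rewrite (bigD1 (Ordinal jd)) //=; congr (_ + _).
case: j jd hz => [|j'] jd hz.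
  rewrite big1 // => l /eqP hl; apply: hz.
    by apply/eqP => e; apply: hl; apply: val_inj.
  by [].
have jd' : (j' < d)%N by apply: ltnW.
rewrite (bigD1 (Ordinal jd')) /=; last by rewrite -val_eqE /=; lia.
rewrite big1 ?addr0 // => l /andP[/eqP h1 /eqP h2]; apply: hz.
  by apply/eqP => e; apply: h1; apply: val_inj.
by apply/eqP => [[e]]; apply: h2; apply: val_inj.
Qed.

Definition endp (l : nat) (p : nat -> nat) := if odd (p l.+1) then 0%N else Q.
Definition startp (l : nat) (p : nat -> nat) := if odd (p l.+1) then Q else 0%N.
Definition nextp (j : nat) (p : nat -> nat) :=
  if odd (p j.+1) then (p j).-1 else (p j).+1.

Lemma Gv_step (p : nat -> nat) j : (j < d)%N -> valid p ->
  (if odd (p j.+1) then (0 < p j)%N else (p j < Q)%N) ->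
  (forall j', j = j'.+1 -> p j' = endp j' p) ->
  Gv (upd p j (nextp j p)) =
  Gv p + eps j - (if j is j'.+1 then eps j' *+ Q else 0).
Proof.
move=> jd vp hr he.
rewrite /Gv.
rewrite -addrA; apply: (fun a b c (H : a - b = c) => etrans (esym (subrK b a)) (etrans (addrC _ _) (congr1 (fun z => b + z) H))).
rewrite -sumrB.
rewrite (@sum2 (fun l => eps l *+ psi (upd p j (nextp j p) l) (odd (upd p j (nextp j p) l.+1))
      - eps l *+ psi (p l) (odd (p l.+1))) j) //; last first.
  move=> l h1 h2; rewrite /upd (negbTE h1) (negbTE h2) subrr //.
rewrite /upd eqxx (_ : (j.+1 == j) = false); last by lia.
have pjQ : (p j <= Q)%N by apply: vp; apply: ltnW.
have e1 : psi (nextp j p) (odd (p j.+1)) = (psi (p j) (odd (p j.+1))).+1.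
  move: hr; rewrite /psi /nextp; case: (odd (p j.+1)) => hr; lia.
rewrite e1 mulrS.
case: j jd hr he e1 pjQ => [|j'] jd hr he e1 pjQ.
  by rewrite addr0 subr0 addrK.
rewrite (_ : (j' == j'.+1) = false); last by lia.
rewrite eqxx (he j' erefl) addrK.
have on : odd (nextp j'.+1 p) = ~~ odd (p j'.+1).
  move: hr; rewrite /nextp; case: (odd (p j'.+2)) => h; last by rewrite /=.
  by case: (p j'.+1) h => //= n _; rewrite negbK.
rewrite on /endp /psi.
case: (odd (p j'.+1)) => /=; rewrite ?subn0 ?subnn ?mulr0n.
  by rewrite sub0r.
by rewrite sub0r.
Qed.


Lemma gain_pos j : (0 < d)%N -> (Q * d <= B)%N -> (j < d)%N ->
  0 < eps j - (if j is j'.+1 then eps j' *+ Q else 0).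
Proof.
move=> d0 hQ jd.
have x0 : (0 : R) < (B.+1)%:R by rewrite ltr0Sn.
case: j jd => [|j'] jd.
  by rewrite subr0 eps_cf // cf_gt0.
rewrite !eps_cf //.
have -> : mm j' = (mm j'.+1).+1 by rewrite /mm; lia.
set m := (mm j'.+1).+1.
rewrite (cf_ratio m).
set x := (B.+1)%:R : R.
have e0 : 0 < cf m x by apply: cf_gt0.
have hb : (Q * m.+1 < B.+1 + m.+1)%N.
  have : (m.+1 <= d)%N by rewrite /m /mm; lia.
  move=> h; apply: leq_ltn_trans (_ : (Q * d < _)%N); first by rewrite leq_mul2l h orbT.
  lia.
have b0 : 0 < x + m.+1%:R by rewrite addr_gt0 // ltr0Sn.
have key : forall e a b : R, 0 < e -> 0 < b -> Q%:R * a < b -> e * a / b *+ Q < e.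
  move=> e a b e0' b0' h.
  rewrite -mulr_natr -mulrA -mulrA -[ltRHS]mulr1 ltr_pM2l //.
  by rewrite mulrA mulrC mulrA ltr_pdivrMr // mul1r.
rewrite subr_gt0; apply: key => //.
by rewrite /x -natrM -natrD ltr_nat.
Qed.


Definition good (p : nat -> nat) (N : nat) :=
  exists s : seq (Ct * Ct), size s = N /\ gimp R ap (Wp p) s.
Definition reach (p q : nat -> nat) (N : nat) :=
  forall M, good q M -> good p (N + M).

Lemma reach_refl p : reach p p 0.
Proof. by move=> M; rewrite add0n. Qed.

Lemma reach_trans p q r N1 N2 : reach p q N1 -> reach q r N2 -> reach p r (N1 + N2).
Proof. by move=> h1 h2 M g; rewrite -addnA; apply: h1; apply: h2. Qed.

Definition cand (j t : nat) : Ct := inr (inord j, inord t).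

Lemma cand_neq j t t' : (t <= Q)%N -> (t' <= Q)%N -> t != t' -> cand j t != cand j t'.
Proof.
move=> tQ t'Q ne; apply/negP => /eqP h.
have := congr1 (fun x : Ct => match x with inr (_, u) => (u : nat) | _ => 0%N end) h.
by rewrite /= !inordK ?ltnS // => e; move: ne; rewrite e eqxx.
Qed.

Lemma Wp_swap p j t : valid p -> (j < d)%N -> (t <= Q)%N -> t != p j ->
  (cand j t |: (Wp p :\ cand j (p j)) = Wp (upd p j t)) /\
  ((cand j t |: Wp p) :\ cand j (p j) = Wp (upd p j t)).
Proof.
move=> vp jd tQ tne.
have pjQ : (p j <= Q)%N by apply: vp; apply: ltnW.
have key : forall x : Ct,
    (x == cand j t) || ((x != cand j (p j)) && (x \in Wp p)) = (x \in Wp (upd p j t)).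
  case=> [f|[l u]]; rewrite !inE //=.
  rewrite /cand /upd.
  have ej : ((l, u) == (inord j, inord t)) = ((l == j :> nat) && (u == t :> nat)).
    rewrite xpair_eqE -!val_eqE /= !inordK //; lia.
  have ej' : ((l, u) == (inord j, inord (p j))) = ((l == j :> nat) && (u == p j :> nat)).
    rewrite xpair_eqE -!val_eqE /= !inordK //; lia.
  rewrite !inj_eq; try (by move=> ? ? [->]).
  rewrite ej ej'.
  case: (eqVneq (l : nat) j) => [e|ne] /=.
    by rewrite e; case: (u == t :> nat); case: (u == p j :> nat).
  by [].
split; apply/setP => x; rewrite -key !inE.
  by [].
case: (eqVneq x (cand j t)) => [->|ne] /=.
  by rewrite cand_neq.
by rewrite andbC.
Qed.


Lemma valid_upd p j t : valid p -> (t <= Q)%N -> valid (upd p j t).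
Proof. by move=> vp tQ l hl; rewrite /upd; case: (l == j); [| apply: vp]. Qed.

Lemma step_reach p j t : valid p -> (j < d)%N -> (t <= Q)%N -> t != p j ->
  Gv p < Gv (upd p j t) -> reach p (upd p j t) 1.
Proof.
move=> vp jd tQ tne hG M [s [hs hg]].
have pjQ : (p j <= Q)%N by apply: vp; apply: ltnW.
have [e1 e2] := Wp_swap vp jd tQ tne.
exists ((cand j (p j), cand j t) :: s); split; first by rewrite /= hs.
split.
- by rewrite inE /cand /= !inordK // ltnS // ltnW.
- by rewrite inE /cand /= !inordK ?ltnS // ltnW.
- rewrite e1 !gsc_Wp2 //; last exact: valid_upd.
  move: hG; rewrite /Gv => hG. by rewrite opprD addrACA subrr add0r subr_gt0.
- by rewrite e2.
Qed.


Lemma odd_nextp p j : (if odd (p j.+1) then (0 < p j)%N else true) ->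
  odd (nextp j p) = ~~ odd (p j).
Proof.
rewrite /nextp; case: (odd (p j.+1)) => h; last by [].
by case: (p j) h => //= n _; rewrite negbK.
Qed.

Definition Sw (j : nat) := forall p, valid p ->
  (forall l, (l <= j)%N -> p l = startp l p) ->
  exists q N, [/\ reach p q N, (Q ^ j.+1 <= N)%N, valid q, q j = endp j p &
     (forall l, (l < j)%N -> q l = startp l q) /\ (forall l, (j < l)%N -> q l = p l)].

Lemma lower_sweep j : (match j with 0%N => True | j'.+1 => Sw j' end) ->
  forall q, valid q -> (forall l, (l < j)%N -> q l = startp l q) ->
  exists q' N', [/\ reach q q' N',
      (Q ^ j <= N'.+1)%N, valid q', q' j = q j &
      (forall l, (l.+1 < j)%N -> q' l = startp l q') /\
      (forall l, (j < l)%N -> q' l = q l) /\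
      (forall j', j = j'.+1 -> q' j' = endp j' q')].
Proof.
case: j => [|j'] IHj q vq hl.
  by exists q, 0%N; split => //; move=> M; rewrite add0n.
have [q' [N' [rq' hN' vq' q'j [q'l q'h]]]] := IHj q vq (fun l hl' => hl l hl').
exists q', N'; split => //.
- exact: leqW.
- by apply: q'h.
split; first by move=> l hl'; apply: q'l.
split; first by move=> l hl'; apply: q'h; apply: ltnW.
move=> j'' [<-]; rewrite q'j /endp q'h //.
Qed.

Lemma sweep_step j : (0 < d)%N -> (Q * d <= B)%N -> (j < d)%N ->
  (match j with 0%N => True | j'.+1 => Sw j' end) -> Sw j.
Proof.
move=> d0 hQ jd IHj p vp hs.
set pi := odd (p j.+1).
have inner : forall r, (r <= Q)%N -> exists q N,
   [/\ reach p q N, (r * Q ^ j <= N)%N, valid q, q j = (if pi then Q - r else r)%N &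
     (forall l, (l < j)%N -> q l = startp l q) /\ (forall l, (j < l)%N -> q l = p l)].
  elim=> [|r IHr] hr.
    exists p, 0%N; split.
    - by move=> M; rewrite add0n.
    - by rewrite mul0n.
    - exact: vp.
    - by rewrite hs // /startp -/pi; case: pi; rewrite ?subn0.
    - by split=> // l hl; apply: hs; apply: ltnW.
  have [q [N [rq hN vq qj [ql qh]]]] := IHr (ltnW hr).
  have [q' [N' [rq' hN' vq' q'j [q'l [q'h hq'e]]]]] : exists q' N', [/\ reach q q' N',
      (Q ^ j <= N'.+1)%N, valid q', q' j = q j &
      (forall l, (l.+1 < j)%N -> q' l = startp l q') /\
      (forall l, (j < l)%N -> q' l = q l) /\
      (forall j', j = j'.+1 -> q' j' = endp j' q')].
    by apply: lower_sweep => // l hl'; apply: ql.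
  have pj1 : q' j.+1 = p j.+1 by rewrite q'h // qh.
  have rng : if odd (q' j.+1) then (0 < q' j)%N else (q' j < Q)%N.
    by rewrite pj1 -/pi q'j qj; case: (pi) => //; lia.
  set t := nextp j q'.
  have tQ : (t <= Q)%N.
    move: rng; rewrite /t /nextp q'j qj pj1 -/pi; case: (pi) => /=; lia.
  have tne : t != q' j.
    move: rng; rewrite /t /nextp; case: (odd (q' j.+1)) => /=; lia.
  have hG : Gv q' < Gv (upd q' j t).
    rewrite /t (Gv_step jd vq' rng); last by move=> j' e; apply: hq'e.
    by rewrite -addrA ltrDl gain_pos.
  have rs := step_reach vq' jd tQ tne hG.
  exists (upd q' j t), (N + N' + 1)%N; split.
  - exact: reach_trans (reach_trans rq rq') rs.
  - by rewrite mulSn; lia.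
  - exact: valid_upd.
  - rewrite /upd eqxx /t /nextp pj1 -/pi q'j qj; case: (pi) => /=; lia.
  split => l hl'.
    have lj : (l == j) = false by lia.
    rewrite /upd lj /startp.
    case: (ltnP l.+1 j) => hlj.
      rewrite (_ : (l.+1 == j) = false); last by lia.
      by rewrite q'l.
    have ej : j = l.+1 by lia.
    rewrite (hq'e l ej) -ej eqxx /endp /t.
    have on : odd (nextp j q') = ~~ odd (q' j) by apply: odd_nextp; move: rng; case: (odd (q' j.+1)).
    by rewrite on -ej; case: (odd (q' j)).
  rewrite /upd (_ : (l == j) = false); last by lia.
  by rewrite q'h // qh.
have [q [N [rq hN vq qj [ql qh]]]] := inner Q (leqnn Q).
exists q, N; split => //.
- by rewrite expnS.
- by rewrite qj /endp -/pi subnn; case: (pi).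
Qed.


Lemma sweep_all j : (0 < d)%N -> (Q * d <= B)%N -> (j < d)%N -> Sw j.
Proof.
move=> d0 hQ; elim: j => [|j IH] jd; apply: sweep_step => //.
exact: IH (ltnW jd).
Qed.

Lemma constr_path : (0 < d)%N -> (Q * d <= B)%N ->
  exists s : seq (Ct * Ct), (Q ^ d <= size s)%N /\ gimp R ap (Wp (fun _ => 0%N)) s.
Proof.
move=> d0 hQ.
have jd : (d.-1 < d)%N by rewrite prednK.
have [q [N [rq hN vq _ _]]] := sweep_all d0 hQ jd (p := fun _ => 0%N) (fun _ _ => leq0n _)
  (fun l _ => erefl).
have [s [hs hg]] := rq 0%N (ex_intro _ [::] (conj erefl I)).
exists s; split => //.
by rewrite hs addn0 -(prednK d0).
Qed.

Lemma card_Wp0 : #|Wp (fun _ => 0%N)| = (B + d + d.+1)%N.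
Proof.
rewrite (_ : Wp _ = [set x | x \in Wp (fun _ => 0%N)]); last by apply/setP => x; rewrite inE.
rewrite card_sum big_sumType /=.
have -> : (\sum_(x : 'I_(B + d)) ((inl x : Ct) \in Wp (fun _ => 0%N) : nat))%N = (B + d)%N.
  rewrite -[X in _ = X]card_ord -sum1_card; apply: eq_bigr => x _; by rewrite inE.
congr (_ + _)%N.
have -> : (\sum_(x : 'I_d.+1 * 'I_Q.+1) ((inr x : Ct) \in Wp (fun _ => 0%N) : nat))%N
  = (\sum_(l < d.+1) \sum_(t < Q.+1) ((inr (l, t) : Ct) \in Wp (fun _ => 0%N) : nat))%N.
  by rewrite pair_big; apply: eq_bigr => [[l t]].
rewrite -[X in _ = X]card_ord -sum1_card; apply: eq_bigr => l _.
rewrite (bigD1 ord0) //= big1 ?addn0; first by rewrite inE.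
move=> t ht; rewrite inE /=.
by case: t ht => [[|t] ht] //= _.
Qed.

Lemma card_Vt : #|{: Vt}| = (d * Q * 2 * d * 2 ^ d)%N.
Proof. by rewrite !card_prod !card_ord card_bool. Qed.

End Constr.


Section Triv.
Variables (R : realType) (k' : nat).
Definition apT (v : 'I_1) (x : 'I_k'.+2) : bool := x == ord_max.
Definition WT : {set 'I_k'.+2} := [set~ ord_max].

Lemma triv_card : #|WT| = k'.+1.
Proof. by rewrite cardsC1 card_ord. Qed.

Lemma triv_path : gimp R apT WT [:: (ord0, ord_max)].
Proof.
have h0 : (ord0 : 'I_k'.+2) != ord_max by rewrite -val_eqE.
split => //.
- by rewrite !inE.
- by rewrite !inE negbK.
- rewrite /gsc !big_ord1 /cnt.
  have -> : [set x in WT | apT ord0 x] = set0.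
    by apply/setP => x; rewrite !inE /apT; case: (x == ord_max).
  have -> : [set x in ord_max |: (WT :\ ord0) | apT ord0 x] = [set ord_max].
    apply/setP => x; rewrite !inE /apT.
    by case: (x == ord_max); rewrite ?andbF ?andbT.
  by rewrite cards0 cards1 /hr big_ord0 big_ord1 subr0 invr_gt0 ltr0Sn.
Qed.
End Triv.

Lemma pow2_big L : (12 <= L)%N -> (16 * (L.+1) ^ 2 <= 2 ^ L)%N.
Proof.
elim: L => [//|L IH] hL.
case: (ltnP L 12) => h.
  have -> : L = 11%N by lia.
  by [].
move: (IH h); rewrite [(2 ^ L.+1)%N]expnS; rewrite !expnS expn0 !muln1; move: (2 ^ L)%N => P H; nia.
Qed.

Lemma powR_bound (R : realType) (k L : nat) : (0 < k)%N -> (k < 2 ^ L.+1)%N ->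
  powR (k%:R : R) (ln (k%:R : R) / ln (2 : R)) <= (k%:R : R) ^+ L.+1.
Proof.
move=> k0 kL.
have k1 : (1 : R) <= k%:R by rewrite ler1n.
have l2 : (0 : R) < ln 2 by apply: ln_gt0; rewrite ltr1n.
rewrite -powR_mulrn ?ler0n //.
apply: ler_powR => //.
rewrite ler_pdivrMr // mulr_natl -lnXn ?ltr0n //.
rewrite ler_ln ?posrE ?ltr0n ?exprn_gt0 //.
by rewrite -natrX ler_nat ltnW.
Qed.

Lemma big_case (k L : nat) : (2 ^ 12 <= k)%N -> (2 ^ L <= k)%N -> (k < 2 ^ L.+1)%N ->
  let d := (2 * L.+1)%N in let B := (k - 2 * d - 1)%N in let Q := (B %/ d)%N in
  [/\ (0 < d)%N, (Q * d <= B)%N, (B + d + d.+1 = k)%N, (k <= Q * Q)%N &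
      (d * Q * 2 * d * 2 ^ d <= 8 * k ^ 5)%N].
Proof.
move=> hk h1 h2 d B Q.
have L12 : (12 <= L)%N.
  have : (2 ^ 12 < 2 ^ L.+1)%N by apply: leq_ltn_trans h2.
  by rewrite ltn_exp2l.
have pb := pow2_big L12.
have kd : (16 * L.+1 ^ 2 <= k)%N := leq_trans pb h1.
have hd : (d * Q + B %% d = B)%N by rewrite mulnC -divn_eq.
have hr : (B %% d < d)%N by rewrite ltn_mod /d.
have eB : (B + d + d.+1 = k)%N by rewrite /B /d; move: kd; rewrite !expnS expn0; nia.
split => //.
- by rewrite mulnC -hd leq_addr.
- move: hd hr kd; rewrite /B /d !expnS expn0 => hd hr kd.
  move: (B %% _)%N hd hr => rr; move: (Q) => q; nia.
- have Qk : (Q <= k)%N by rewrite /Q (leq_trans (leq_div _ _)) // /B; lia.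
  have dk : (d <= k)%N by move: kd; rewrite /d !expnS expn0; nia.
  have ed : (2 ^ d = 4 * (2 ^ L) ^ 2)%N by rewrite -expnM (_ : 4 = 2 ^ 2)%N // -expnD /d; congr (2 ^ _)%N; lia.
  have e2 : (2 ^ d <= 4 * k ^ 2)%N by rewrite ed leq_mul2l leq_exp2r.
  have : (d * Q * 2 * d <= k * k * 2 * k)%N by rewrite !leq_mul.
  move=> h; rewrite (_ : (8 * k ^ 5 = (k * k * 2 * k) * (4 * k ^ 2))%N); last first.
    by rewrite !expnS expn0; lia.
  exact: leq_mul.
Qed.

Unset Implicit Arguments.

Theorem theorem3 (R : realType) :
  exists (p : {poly R}) (c : R), 0 < c /\
  forall k : nat, (1 <= k)%N ->
    exists (m n : nat) (A : 'I_n -> {set 'I_m}) (W0 : {set 'I_m})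
           (s : seq ('I_m * 'I_m)),
      [/\ n%:R <= p.[k%:R],
          #|W0| = k,
          c * powR (k%:R : R) (ln (k%:R : R) / ln (2 : R)) <= (size s)%:R
        & pav_improving_seq R A W0 s].
Proof.
exists ('X^5 *+ 8), (((2 ^ 12)%:R ^+ 12)^-1).
split; first by rewrite invr_gt0 exprn_gt0 // ltr0n expn_gt0.
move=> k k1.
set L := trunc_log 2 k.
have [hL1 hL2] : (2 ^ L <= k)%N /\ (k < 2 ^ L.+1)%N.
  by have := trunc_log_bounds (isT : (1 < 2)%N) k1; case/andP.
have pb := powR_bound R k1 hL2.
have pk : (1 : R) <= ('X^5 *+ 8 : {poly R}).[k%:R].
  rewrite hornerMn hornerXn -natrX -mulr_natr -natrM ler1n.
  by rewrite muln_gt0 expn_gt0 k1.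
have c1 : ((2 ^ 12)%:R ^+ 12 : R)^-1 <= 1.
  rewrite invf_le1; first by rewrite exprn_ege1 // ler1n expn_gt0.
  by rewrite exprn_gt0 // ltr0n expn_gt0.
have c0 : (0 : R) <= ((2 ^ 12)%:R ^+ 12 : R)^-1.
  by rewrite invr_ge0 exprn_ge0 // ler0n.
case: (ltnP k (2 ^ 12)) => hk.
  have [k' ek] : exists k', k = k'.+1 by exists k.-1; rewrite prednK.
  subst k.
  exists #|'I_k'.+2|, #|'I_1|, (Aord (@apT k')), (@fC _ @: WT k'),
    [seq (fC q.1, fC q.2) | q <- [:: (ord0, ord_max)]].
  split.
  - by rewrite card_ord.
  - by rewrite card_imset ?triv_card //; exact: fC_inj.
  - rewrite /= mulr1n.
    apply: le_trans (_ : ((2 ^ 12)%:R ^+ 12 : R)^-1 * (k'.+1%:R ^+ L.+1) <= 1).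
      by apply: ler_wpM2l.
    rewrite ler_pdivrMl ?exprn_gt0 ?ltr0n ?expn_gt0 // mulr1.
    have L12 : (L.+1 <= 12)%N.
      have : (2 ^ L < 2 ^ 12)%N by apply: leq_ltn_trans hk.
      by rewrite ltn_exp2l.
    rewrite -!natrX ler_nat.
    apply: leq_trans (_ : (2 ^ 12) ^ L.+1 <= _)%N.
      by rewrite leq_exp2r // ltnW.
    by rewrite leq_pexp2l // expn_gt0.
  - exact: pav_transfer_path (triv_path R k').
have [d0 hQ eB kQ nb] := big_case hk hL1 hL2.
set d := (2 * L.+1)%N in d0 hQ eB kQ nb.
set B := (k - 2 * d - 1)%N in hQ eB kQ nb.
set Q := (B %/ d)%N in hQ kQ nb.
have [s [hs hg]] := constr_path R d0 hQ.
exists _, _, (Aord (@ap d Q B)), (@fC _ @: Wp d Q B (fun _ => 0%N)),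
  [seq (fC q.1, fC q.2) | q <- s].
split.
- rewrite !card_prod !card_ord card_bool hornerMn hornerXn -natrX -[X in _ <= X]mulr_natr -natrM ler_nat.
  by rewrite [(k ^ 5 * 8)%N]mulnC.
- by rewrite card_imset ?card_Wp0 //; exact: fC_inj.
- rewrite size_map.
  apply: le_trans (_ : (k%:R : R) ^+ L.+1 <= _).
    apply: le_trans pb.
    by rewrite -[X in _ <= X]mul1r ler_wpM2r // powR_ge0.
  rewrite -natrX ler_nat.
  apply: leq_trans hs.
  rewrite (_ : d = (2 * L.+1)%N) // expnM.
  by rewrite -mulnn leq_exp2r.
- exact: pav_transfer_path hg.
Qed.
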